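(* Let $\alpha,\beta,\gamma$ be partitions with $\alpha_1\le2$ and let $\Gamma$ be an LR-tableau of type $(\alpha,\beta,\gamma)$ such that every row of $\Gamma$ contains at most one (non-empty) box. Then in the poset $(\mathcal D_\Gamma,\le_{\rm arc})$ all saturated chains have the same length.
   Context: For a partition $\lambda$, $\lambda'$ is its conjugate; here the diagram of $\lambda$ is drawn with $\lambda'_i$ boxes in row $i$, so for $\gamma\subseteq\beta$ the $i$-th row of the skew diagram $\beta\setminus\gamma$ consists of the boxes in columns $\gamma'_i+1,\dots,\beta'_i$. With $\alpha_1\le 2$, $\alpha'=(\alpha'_1,\alpha'_2)$. An LR-tableau of type $(\alpha,\beta,\gamma)$ is a filling of $\beta\setminus\gamma$ with $\alpha'_1$ entries $1$ and $\alpha'_2$ entries $2$, weakly increasing along rows, strictly increasing down columns, and such that for each $c\ge0$ the number of entries $1$ in columns to the right of column $c$ is at least the number of entries $2$ there. Place the positive integers on a line in decreasing order from left to right. An arc is a pair $(m,n)$, $m>n$ positive integers (source $m$, target $n$); a pole at $n$ is regarded as an arc $(\infty,n)$. An arc diagram of type $(\alpha,\beta,\gamma)$ is a finite multiset of $\alpha'_2$ arcs and $\alpha'_1-\alpha'_2$ poles with, for each $i$, exactly $\beta'_i-\gamma'_i$ members having source or target $i$. It has LR type $\Gamma$ if for each $i$ the number of arcs with source $i$ equals the number of entries $2$ in row $i$ of $\Gamma$; $\mathcal D_\Gamma$ is the set of arc diagrams of type $(\alpha,\beta,\gamma)$ of LR type $\Gamma$. Members $(m,n),(k,r)$ cross iff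 $r<n<k<m$ or $n<r<m<k$. Moves: for $a>b>c>d$, (A) replaces arcs $(a,c),(b,d)$ by $(a,d),(b,c)$; for $a>b>c$, (B) replaces arc $(a,c)$ and pole $(\infty,b)$ by arc $(a,b)$ and pole $(\infty,c)$; (C) replaces arcs $(a,c),(b,d)$ by $(a,b),(c,d)$; (D) replaces arc $(a,c)$ and pole $(\infty,b)$ by arc $(b,c)$ and pole $(\infty,a)$. $\Delta\le_{\rm arc}\Delta'$ iff $\Delta$ is obtained from $\Delta'$ by a finite (possibly empty) sequence of moves; $\mathcal D_\Gamma$ carries the restricted order. A chain is saturated if it has no refinement, i.e. is not properly contained in another chain of the poset. *)

(* Defs.v *)
From mathcomp Require Import all_boot.
From mathcomp Require Import finmap multiset.
From Stdlib Require Import Relations.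

Set Implicit Arguments.
Unset Strict Implicit.
Unset Printing Implicit Defensive.

Local Open Scope nat_scope.

Definition is_partition (l : seq nat) : bool :=
  sorted geq l && all (fun x => 0 < x) l.

(* conjugate: conj l i = l'_i = #{ j | l_j >= i } (used for i >= 1). *)
Definition conj (l : seq nat) (i : nat) : nat := count (fun x => i <= x) l.

(* Row i (i >= 1) of beta \ gamma consists of columns gamma'_i+1 .. beta'_i. *)
Definition is_box (beta gamma : seq nat) (i j : nat) : bool :=
  [&& 0 < i, conj gamma i < j & j <= conj beta i].

(* All boxes lie in rows 1 .. beta_1 and columns 1 .. size beta = beta'_1. *)
Definition nrows (beta : seq nat) : nat := head 0 beta.
Definition ncols (beta : seq nat) : nat := size beta.

(* A filling is a function (row, column) |-> entry; only its values on the
   boxes of beta \ gamma are relevant. *)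
Definition filling := nat -> nat -> nat.

Definition row_count (beta gamma : seq nat) (T : filling) (e i : nat) : nat :=
  \sum_(1 <= j < (ncols beta).+1) (is_box beta gamma i j && (T i j == e)).

Definition right_count (beta gamma : seq nat) (T : filling) (e c : nat) : nat :=
  \sum_(1 <= i < (nrows beta).+1) \sum_(1 <= j < (ncols beta).+1)
     [&& c < j, is_box beta gamma i j & T i j == e].

Definition total_count (beta gamma : seq nat) (T : filling) (e : nat) : nat :=
  right_count beta gamma T e 0.

(* LR-tableau of type (alpha, beta, gamma) with alpha_1 <= 2,
   alpha' = (alpha'_1, alpha'_2). *)
Definition LR_tableau (alpha beta gamma : seq nat) (T : filling) : Prop :=
  (forall i j, is_box beta gamma i j -> T i j = 1 \/ T i j = 2) /\
  total_count beta gamma T 1 = conj alpha 1 /\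
  total_count beta gamma T 2 = conj alpha 2 /\
  (forall i j, is_box beta gamma i j -> is_box beta gamma i j.+1 ->
     T i j <= T i j.+1) /\
  (forall i j, is_box beta gamma i j -> is_box beta gamma i.+1 j ->
     T i j < T i.+1 j) /\
  (* lattice word condition *)
  (forall c, right_count beta gamma T 2 c <= right_count beta gamma T 1 c).

(* A member is (Some m, n) for the arc (m, n) or (None, n) for the pole
   (infinity, n). *)
Definition member := (option nat * nat)%type.
Definition diagram := multiset member.

Definition is_arc (x : member) : bool := if x.1 is Some _ then true else false.
Definition is_pole (x : member) : bool := ~~ is_arc x.

Definition mcount (D : diagram) (P : pred member) : nat :=
  \sum_(x <- finsupp D | P x) D x.

Definition well_formed_member (x : member) : bool :=
  (0 < x.2) && (if x.1 is Some m then x.2 < m else true).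

Definition touches (i : nat) (x : member) : bool := (x.1 == Some i) || (x.2 == i).

Definition arc_diagram_of_type (alpha beta gamma : seq nat) (D : diagram) : Prop :=
  (forall x, x \in finsupp D -> well_formed_member x) /\
  mcount D is_arc = conj alpha 2 /\
  mcount D is_pole = conj alpha 1 - conj alpha 2 /\
  (forall i, 0 < i -> mcount D (touches i) = conj beta i - conj gamma i).

Definition has_LR_type (beta gamma : seq nat) (T : filling) (D : diagram) : Prop :=
  forall i, 0 < i -> mcount D (fun x => x.1 == Some i) = row_count beta gamma T 2 i.

Definition D_Gamma (alpha beta gamma : seq nat) (T : filling) (D : diagram) : Prop :=
  arc_diagram_of_type alpha beta gamma D /\ has_LR_type beta gamma T D.

Definition replace2 (D : diagram) (x y x' y' : member) : diagram :=
  msetD (msetB D (msetD (msetn 1 x) (msetn 1 y))) (msetD (msetn 1 x') (msetn 1 y')).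

Definition move (D E : diagram) : Prop :=
  (exists a b c d, [&& d < c, c < b & b < a] /\
     msubset (msetD (msetn 1 (Some a, c)) (msetn 1 (Some b, d))) D /\
     E = replace2 D (Some a, c) (Some b, d) (Some a, d) (Some b, c))      (* A *)
  \/
  (exists a b c, [&& c < b & b < a] /\
     msubset (msetD (msetn 1 (Some a, c)) (msetn 1 (None, b))) D /\
     E = replace2 D (Some a, c) (None, b) (Some a, b) (None, c))          (* B *)
  \/
  (exists a b c d, [&& d < c, c < b & b < a] /\
     msubset (msetD (msetn 1 (Some a, c)) (msetn 1 (Some b, d))) D /\
     E = replace2 D (Some a, c) (Some b, d) (Some a, b) (Some c, d))      (* C *)
  \/
  (exists a b c, [&& c < b & b < a] /\
     msubset (msetD (msetn 1 (Some a, c)) (msetn 1 (None, b))) D /\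
     E = replace2 D (Some a, c) (None, b) (Some b, c) (None, a)).         (* D *)

Definition arc_le (D D' : diagram) : Prop := clos_refl_trans diagram move D' D.

Local Open Scope fset_scope.

Definition is_chain (alpha beta gamma : seq nat) (T : filling) (C : {fset diagram}) : Prop :=
  (forall D, D \in C -> D_Gamma alpha beta gamma T D) /\
  (forall D E, D \in C -> E \in C -> arc_le D E \/ arc_le E D).

Definition saturated_chain (alpha beta gamma : seq nat) (T : filling) (C : {fset diagram}) : Prop :=
  is_chain alpha beta gamma T C /\
  (forall C', is_chain alpha beta gamma T C' -> C `<=` C' -> C' = C).

Definition chain_length (C : {fset diagram}) : nat := #|` C| - 1.

(* Main.v *)
Require Import Defs.
From mathcomp Require Import all_boot.
From mathcomp Require Import finmap multiset.
From mathcomp Require Import zify.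
From Stdlib Require Import Relations.

Module Aux.
Set Implicit Arguments. Unset Strict Implicit. Unset Printing Implicit Defensive.
Local Open Scope nat_scope.

Notation S1 x := (msetn 1 x).

Definition msum (D : diagram) (f : member -> nat) : nat := \sum_(x <- enum_mset D) f x.

Lemma msum_perm (A B : diagram) : perm_eq (enum_mset (msetD A B)) (enum_mset A ++ enum_mset B).
Proof.
apply/allP => x _ /=; rewrite count_mem_mset msetE2 -!count_mem_mset; apply/eqP; elim: (enum_mset A) => //= a s IH; by rewrite -IH addnA.
Qed.

Lemma msumD A B f : msum (msetD A B) f = msum A f + msum B f.
Proof. by rewrite /msum (perm_big _ (msum_perm A B)) big_cat. Qed.

Lemma msum1 x f : msum (S1 x) f = f x.
Proof. by rewrite /msum enum_msetn /= big_cons big_nil addn0. Qed.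

Lemma mcountE D P : mcount D P = msum D (fun x => P x : nat).
Proof.
rewrite /mcount /msum -big_mkcond /= sum_mset.
by apply: eq_bigr => i _; rewrite muln1.
Qed.

Lemma memE (D : diagram) x : (x \in enum_mset D) = (x \in D).
Proof. by rewrite in_mset -count_mem_mset -has_count has_pred1. Qed.

Lemma msum_le D f g : (forall x, x \in D -> f x <= g x) -> msum D f <= msum D g.
Proof.
move=> H; rewrite /msum big_seq_cond [X in _ <= X]big_seq_cond.
by apply: leq_sum => i /andP[Hi _]; apply: H; rewrite -memE.
Qed.

Lemma msum_eq D f g : (forall x, x \in D -> f x = g x) -> msum D f = msum D g.
Proof.
move=> H; rewrite /msum big_seq_cond [RHS]big_seq_cond.
by apply: eq_bigr => i /andP[Hi _]; apply: H; rewrite -memE.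
Qed.

Lemma msum_add D f g : msum D (fun x => f x + g x) = msum D f + msum D g.
Proof. by rewrite /msum big_split. Qed.

Lemma msum_ge D f x : x \in D -> f x <= msum D f.
Proof.
move=> Hx; rewrite /msum; rewrite -memE in Hx.
by rewrite (big_rem x Hx) /= leq_addr.
Qed.


Lemma msum_gt0 D f : 0 < msum D f -> exists x, x \in D /\ 0 < f x.
Proof.
rewrite /msum => H.
have [x Hx Hf]: exists2 x, x \in enum_mset D & 0 < f x.
  elim: (enum_mset D) H => [|a s IH]; first by rewrite big_nil.
  rewrite big_cons; case: (posnP (f a)) => [->|Ha] /= H.
    by have [x Hx Hf] := IH H; exists x => //; rewrite inE Hx orbT.
  by exists a => //; rewrite inE eqxx.
by exists x; rewrite -memE.
Qed.

Lemma msetDBK (M X : diagram) : msetB (msetD M X) X = M.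
Proof. by apply/msetP => w; rewrite !msetE2 addnK. Qed.

Lemma msubsetDr (M X : diagram) : msubset X (msetD M X).
Proof. by apply/msubsetP => w; rewrite msetE2 leq_addl. Qed.

Lemma decomp (D X : diagram) : msubset X D -> D = msetD (msetB D X) X.
Proof. by move=> H; rewrite msetBDK. Qed.

Lemma repl M x y x' y' :
  replace2 (msetD M (msetD (S1 x) (S1 y))) x y x' y' = msetD M (msetD (S1 x') (S1 y')).
Proof. by rewrite /replace2 msetDBK. Qed.

Ltac mset_solve := apply/msetP => w; rewrite !msetE2 !msetnE; lia.

Lemma test_solve (M : diagram) a b c : msetD (msetD M (S1 a)) (msetD (S1 b) (S1 c)) =
   msetD (S1 c) (msetD (msetD (S1 a) M) (S1 b)).
Proof. mset_solve. Qed.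

Lemma msumX (x y : member) f : msum (msetD (S1 x) (S1 y)) f = f x + f y.
Proof. by rewrite msumD !msum1. Qed.

Lemma in_S1D (M : diagram) (x y z : member) : (z \in msetD M (msetD (S1 x) (S1 y))) = [|| z \in M, z == x | z == y].
Proof. by rewrite !in_msetD !in_msetn. Qed.

Definition wfD (D : diagram) := forall x, x \in D -> well_formed_member x.
Definition tchD (D : diagram) := forall i, 0 < i -> mcount D (touches i) <= 1.
Definition DG alpha beta gamma T D := D_Gamma alpha beta gamma T D.

Section DGsec.
Variables (alpha beta gamma : seq nat) (T : filling).
Hypothesis Hrow : forall i, 0 < i -> conj beta i - conj gamma i <= 1.

Lemma DG_wf D : DG alpha beta gamma T D -> wfD D.
Proof. by case=> [[H _] _] x Hx; apply: H; rewrite msuppE. Qed.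

Lemma DG_tch D : DG alpha beta gamma T D -> tchD D.
Proof. by case=> [[_ [_ [_ H]]] _] i Hi; rewrite H // Hrow. Qed.

Lemma DG_pres (M : diagram) (x y x' y' : member) :
  well_formed_member x' -> well_formed_member y' ->
  is_arc x + is_arc y = is_arc x' + is_arc y' ->
  is_pole x + is_pole y = is_pole x' + is_pole y' ->
  (forall i, touches i x + touches i y = touches i x' + touches i y') ->
  (forall i, (x.1 == Some i) + (y.1 == Some i) = (x'.1 == Some i) + (y'.1 == Some i)) ->
  DG alpha beta gamma T (msetD M (msetD (S1 x) (S1 y))) ->
  DG alpha beta gamma T (msetD M (msetD (S1 x') (S1 y'))).
Proof.
move=> wx wy Ha Hp Ht Hs [[Hw [HA [HP HT]]] HL].
have E P : mcount (msetD M (msetD (S1 x') (S1 y'))) P =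
   mcount M P + (P x' + P y').
  by rewrite !mcountE msumD msumX.
have E' P : mcount (msetD M (msetD (S1 x) (S1 y))) P =
   mcount M P + (P x + P y).
  by rewrite !mcountE msumD msumX.
split; [split; [|split; [|split]]|].
- move=> z; rewrite msuppE in_S1D => /or3P [Hz|/eqP->|/eqP->] //.
  by apply: Hw; rewrite msuppE in_S1D Hz.
- by rewrite E -Ha -E'.
- by rewrite E -Hp -E'.
- by move=> i Hi; rewrite E -Ht -E' HT.
- by move=> i Hi; rewrite E -Hs -E' HL.
Qed.

End DGsec.

Lemma sum_eq_lt (m k : nat) : \sum_(i < k) (m == i) = (m < k).
Proof.
elim: k => [|k IH]; first by rewrite big_ord0.
rewrite big_ord_recr /= IH.
lia.
Qed.

Definition srclt k (x : member) : bool := if x.1 is Some m then m < k else false.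
Definition g k (D : diagram) := msum D (srclt k).

Lemma g_sum k D : g k D = \sum_(i < k) mcount D (fun x => x.1 == Some (nat_of_ord i)).
Proof.
rewrite /g /msum; under [RHS]eq_bigr => i _ do rewrite mcountE /msum.
rewrite exchange_big /=; apply: eq_bigr => x _.
rewrite /srclt; case: x => [[m|] t] /=; last by rewrite big1.
by rewrite -sum_eq_lt; apply: eq_bigr => i _.
Qed.

Lemma msum_split (D X : diagram) f : msubset X D -> msum D f = msum (msetB D X) f + msum X f.
Proof. by move=> H; rewrite {1}(decomp H) msumD. Qed.

Definition moveAB (D E : diagram) : Prop :=
  (exists a b c d, [&& d < c, c < b & b < a] /\
     msubset (msetD (msetn 1 (Some a, c)) (msetn 1 (Some b, d))) D /\
     E = replace2 D (Some a, c) (Some b, d) (Some a, d) (Some b, c))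
  \/
  (exists a b c, [&& c < b & b < a] /\
     msubset (msetD (msetn 1 (Some a, c)) (msetn 1 (None, b))) D /\
     E = replace2 D (Some a, c) (None, b) (Some a, b) (None, c)).

Lemma g_repl D (x y x' y' : member) k : msubset (msetD (S1 x) (S1 y)) D ->
  g k D = msum (msetB D (msetD (S1 x) (S1 y))) (srclt k) + (srclt k x + srclt k y) /\
  g k (replace2 D x y x' y') = msum (msetB D (msetD (S1 x) (S1 y))) (srclt k) + (srclt k x' + srclt k y').
Proof. by move=> H; rewrite /g (msum_split _ H) /replace2 msumD !msumX. Qed.

Lemma move_g D E : move D E ->
  (forall k, g k D <= g k E) /\ (moveAB D E \/ exists k, g k D < g k E).
Proof.
case=> [[a [b [c [d [/and3P[h1 h2 h3] [HS ->]]]]]]|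
        [[a [b [c [/andP[h1 h2] [HS ->]]]]]|
        [[a [b [c [d [/and3P[h1 h2 h3] [HS ->]]]]]]|
         [a [b [c [/andP[h1 h2] [HS ->]]]]]]]].
- split; last by left; left; exists a, b, c, d; rewrite h1 h2 h3.
  by move=> k; have [-> ->] := g_repl (Some a, d) (Some b, c) k HS; rewrite /srclt /=; lia.
- split; last by left; right; exists a, b, c; rewrite h1 h2.
  by move=> k; have [-> ->] := g_repl (Some a, b) (None, c) k HS; rewrite /srclt /=; lia.
- split.
    by move=> k; have [-> ->] := g_repl (Some a, b) (Some c, d) k HS; rewrite /srclt /=; lia.
  right; exists b; have [-> ->] := g_repl (Some a, b) (Some c, d) b HS; rewrite /srclt /=; lia.
- split.
    by move=> k; have [-> ->] := g_repl (Some b, c) (None, a) k HS; rewrite /srclt /=; lia.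
  right; exists a; have [-> ->] := g_repl (Some b, c) (None, a) a HS; rewrite /srclt /=; lia.
Qed.

Lemma Some_eq (a i : nat) : (Some a == Some i) = (a == i).
Proof. by apply/eqP/eqP => [[]|->]. Qed.

Section DGsec2.
Variables (alpha beta gamma : seq nat) (T : filling).
Hypothesis Hrow : forall i, 0 < i -> conj beta i - conj gamma i <= 1.
Local Notation DG := (DG alpha beta gamma T).

Lemma DG_g D E k : DG D -> DG E -> g k D = g k E.
Proof.
move=> HD HE; rewrite !g_sum; apply: eq_bigr => [[i Hi]] _ /=.
case: (posnP i) => [->|ip].
  have Z F : DG F -> mcount F (fun x => x.1 == Some 0) = 0.
    move=> HF; rewrite mcountE /msum big_seq big1 // => x.
    rewrite memE => /(DG_wf HF); case: x => [[m|] t] //=.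
    by rewrite Some_eq => /andP[h1 h2]; case: eqP => // Hm; move: h2; rewrite Hm.
  by rewrite !Z.
by have [_ H1] := HD; have [_ H2] := HE; rewrite H1 // H2.
Qed.

Lemma moveAB_DG D E : moveAB D E -> DG D -> DG E.
Proof.
case=> [[a [b [c [d [/and3P[h1 h2 h3] [HS ->]]]]]]|[a [b [c [/andP[h1 h2] [HS ->]]]]]] HD.
- have wy : well_formed_member (Some b, d).
    by apply: (DG_wf HD); apply: (msubset_subset HS); rewrite in_msetD !in_msetn eqxx orbT.
  move: HD; rewrite {1}(decomp HS) /replace2; apply: DG_pres => //=.
  + move: wy; rewrite /well_formed_member /=; lia.
  + move: wy; rewrite /well_formed_member /=; lia.
  + by move=> i; rewrite /touches /= !Some_eq; lia.
- have wx : well_formed_member (Some a, c).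
    by apply: (DG_wf HD); apply: (msubset_subset HS); rewrite in_msetD !in_msetn eqxx.
  move: HD; rewrite {1}(decomp HS) /replace2; apply: DG_pres => //=.
  all: try (move: wx; rewrite /well_formed_member /=; lia).
  all: try (by move=> i; rewrite /touches /= ?Some_eq; lia).
Qed.

End DGsec2.

Definition gto (o1 o2 : option nat) : bool :=
  match o1, o2 with
  | None, Some _ => true
  | Some a, Some b => b < a
  | _, _ => false
  end.
Definition inv (x y : member) : nat := (x.2 < y.2) && gto x.1 y.1.
Definition Pz (x y z : member) : nat := inv z x + inv z y + inv x z + inv y z.

Lemma zA (a b c d o t : nat) : d < c -> c < b -> b < a -> 0 < t ->
  ~~ touches a (Some o, t) -> ~~ touches b (Some o, t) -> ~~ touches c (Some o, t) -> ~~ touches d (Some o, t) ->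
  Pz (Some a, c) (Some b, d) (Some o, t) <= Pz (Some a, d) (Some b, c) (Some o, t) /\
  (Pz (Some a, c) (Some b, d) (Some o, t) < Pz (Some a, d) (Some b, c) (Some o, t) -> [&& d < t, t < c, b < o & o < a]).
Proof.
rewrite /Pz /inv /touches /= !Some_eq => *. split; lia.
Qed.

Lemma zAn (a b c d t : nat) : d < c -> c < b -> b < a ->
  ~~ touches c (None, t) -> ~~ touches d (None, t) ->
  Pz (Some a, c) (Some b, d) (None, t) = Pz (Some a, d) (Some b, c) (None, t).
Proof. rewrite /Pz /inv /touches /= => *; lia. Qed.

Lemma zB (a b c o t : nat) : c < b -> b < a -> 0 < t ->
  ~~ touches a (Some o, t) -> ~~ touches b (Some o, t) -> ~~ touches c (Some o, t) ->
  Pz (Some a, c) (None, b) (Some o, t) <= Pz (Some a, b) (None, c) (Some o, t) /\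
  (Pz (Some a, c) (None, b) (Some o, t) < Pz (Some a, b) (None, c) (Some o, t) -> [&& c < t, t < b & a < o]).
Proof. rewrite /Pz /inv /touches /= !Some_eq => *. split; lia. Qed.

Lemma zBn (a b c t : nat) : c < b -> b < a ->
  ~~ touches b (None, t) -> ~~ touches c (None, t) ->
  Pz (Some a, c) (None, b) (None, t) <= Pz (Some a, b) (None, c) (None, t) /\
  (Pz (Some a, c) (None, b) (None, t) < Pz (Some a, b) (None, c) (None, t) -> (c < t) && (t < b)).
Proof. rewrite /Pz /inv /touches /= => *. split; lia. Qed.

Definition Bm (A C : diagram) := msum A (fun x => msum C (inv x)).
Definition rk (D : diagram) := Bm D D.

Lemma inv_xx x : inv x x = 0.
Proof. by rewrite /inv ltnn. Qed.

Lemma rank_decomp (M : diagram) (x y : member) :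
  rk (msetD M (msetD (S1 x) (S1 y))) = Bm M M + msum M (Pz x y) + (inv x y + inv y x).
Proof.
rewrite /rk /Bm msumD msumX.
have E1 w : msum (msetD M (msetD (S1 x) (S1 y))) (inv w) =
            msum M (inv w) + (inv w x + inv w y) by rewrite msumD msumX.
rewrite (msum_eq (g := fun w => msum M (inv w) + (inv w x + inv w y))); last by move=> w _; rewrite E1.
rewrite msum_add !E1 !inv_xx.
have -> : msum M (Pz x y) = msum M (fun w => inv w x + inv w y) + msum M (inv x) + msum M (inv y).
  by rewrite /Pz !msum_add.
lia.
Qed.

Lemma msum_lt_ex (M : diagram) f g : msum M f < msum M g -> exists z, z \in M /\ f z < g z.
Proof.
case: (boolP (has (fun z => f z < g z) (enum_mset M))) => [/hasP [z Hz Hlt]|Hn] H.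
  by exists z; rewrite -memE.
exfalso; move: H; rewrite ltnNge => /negP; apply; apply: msum_le => z Hz.
by move/hasPn: Hn => Hn; rewrite leqNgt Hn // memE.
Qed.

Lemma avoid (M : diagram) (x y z : member) i : tchD (msetD M (msetD (S1 x) (S1 y))) -> 0 < i ->
  z \in M -> touches i x || touches i y -> ~~ touches i z.
Proof.
move=> HT ip Hz Hxy; have := HT i ip; rewrite mcountE msumD msumX => H2.
have H1 := msum_ge (fun w : member => nat_of_bool (touches i w)) Hz.
apply/negP => Hz'; rewrite /= Hz' in H1.
by case/orP: Hxy => E; rewrite E in H2; lia.
Qed.

Lemma inM_D (M : diagram) (x y z : member) : z \in M -> z \in msetD M (msetD (S1 x) (S1 y)).
Proof. by rewrite in_S1D => ->. Qed.

Lemma rankA (D : diagram) a b c d : [&& d < c, c < b & b < a] ->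
  msubset (msetD (S1 (Some a, c)) (S1 (Some b, d))) D -> tchD D -> wfD D ->
  let E := replace2 D (Some a, c) (Some b, d) (Some a, d) (Some b, c) in
  rk D < rk E /\ (rk D + 1 < rk E -> exists o t,
     (Some o, t) \in msetB D (msetD (S1 (Some a, c)) (S1 (Some b, d))) /\ [&& d < t, t < c, b < o & o < a]).
Proof.
move=> /and3P[h1 h2 h3] HS HT HW E.
set M := msetB D _.
have eD : D = msetD M (msetD (S1 (Some a, c)) (S1 (Some b, d))) by exact: decomp.
have wy : well_formed_member (Some b, d).
  by apply: HW; rewrite eD in_S1D eqxx !orbT.
have d0 : 0 < d by move: wy => /andP[].
have rD := rank_decomp M (Some a, c) (Some b, d).
have rE : rk E = Bm M M + msum M (Pz (Some a, d) (Some b, c)) + 1.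
  rewrite /E /replace2 -/M rank_decomp /inv /=; lia.
rewrite -eD /inv /= in rD.
rewrite eD in HT HW.
have Hz z : z \in M -> Pz (Some a, c) (Some b, d) z <= Pz (Some a, d) (Some b, c) z /\
   (Pz (Some a, c) (Some b, d) z < Pz (Some a, d) (Some b, c) z ->
     exists o t, z = (Some o, t) /\ [&& d < t, t < c, b < o & o < a]).
  move=> zM.
  have av i : 0 < i -> touches i (Some a, c) || touches i (Some b, d) -> ~~ touches i z.
    by move=> ip; apply: (avoid HT ip zM).
  have wz := HW z (inM_D _ _ zM).
  case: z zM wz av => [[o|] t] zM wz av.
  - have t0 : 0 < t by move: wz => /andP[].
    have := zA h1 h2 h3 t0 (av a _ _) (av b _ _) (av c _ _) (av d _ _).
    rewrite /touches /= !eqxx /= !orbT; case => //.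
    + lia.
    + lia.
    + lia.
    + move=> H1 H2; split => // /H2 H; by exists o, t.
  - have := @zAn a b c d t h1 h2 h3 (av c _ _) (av d _ _).
    rewrite /touches /= !eqxx /= !orbT => -> //; try lia.
have Hle := msum_le (fun z zM => (Hz z zM).1).
split; first by rewrite rE rD; lia.
move=> Hlt; have [z [zM Hzl]] := @msum_lt_ex M (Pz (Some a, c) (Some b, d)) (Pz (Some a, d) (Some b, c)) ltac:(lia).
have [o [t [ez Ht]]] := (Hz z zM).2 Hzl.
by exists o, t; rewrite -ez.
Qed.

Lemma rankB (D : diagram) a b c : [&& c < b & b < a] ->
  msubset (msetD (S1 (Some a, c)) (S1 (None, b))) D -> tchD D -> wfD D ->
  let E := replace2 D (Some a, c) (None, b) (Some a, b) (None, c) in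
  rk D < rk E /\ (rk D + 1 < rk E -> exists o t,
     (o, t) \in msetB D (msetD (S1 (Some a, c)) (S1 (None, b))) /\ [&& c < t & t < b] /\
     (o = None \/ exists m, o = Some m /\ a < m)).
Proof.
move=> /andP[h2 h3] HS HT HW E.
set M := msetB D _.
have eD : D = msetD M (msetD (S1 (Some a, c)) (S1 (None, b))) by exact: decomp.
have rD := rank_decomp M (Some a, c) (None, b).
have rE : rk E = Bm M M + msum M (Pz (Some a, b) (None, c)) + 1.
  rewrite /E /replace2 -/M rank_decomp /inv /=; lia.
rewrite -eD /inv /= in rD.
rewrite eD in HT HW.
have Hz z : z \in M -> Pz (Some a, c) (None, b) z <= Pz (Some a, b) (None, c) z /\
   (Pz (Some a, c) (None, b) z < Pz (Some a, b) (None, c) z ->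
     [&& c < z.2 & z.2 < b] /\ (z.1 = None \/ exists m, z.1 = Some m /\ a < m)).
  move=> zM.
  have av i : 0 < i -> touches i (Some a, c) || touches i (None, b) -> ~~ touches i z.
    by move=> ip; apply: (avoid HT ip zM).
  have wz := HW z (inM_D _ _ zM).
  have wx : well_formed_member (Some a, c) by apply: HW; rewrite in_S1D eqxx !orbT.
  have c0 : 0 < c by move: wx => /andP[].
  case: z zM wz av => [[o|] t] zM wz av.
  - have t0 : 0 < t by move: wz => /andP[].
    have := @zB a b c o t h2 h3 t0 (av a _ _) (av b _ _) (av c _ _).
    rewrite /touches /= !eqxx /= ?orbT; case => //; try lia.
    move=> H1 H2; split => // /H2 /and3P[-> -> H] /=; split => //; right; by exists o.
  - have := @zBn a b c t h2 h3 (av b _ _) (av c _ _).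
    rewrite /touches /= !eqxx /= ?orbT; case => //; try lia.
    move=> H1 H2; split => // /H2 /andP[-> ->] /=; split => //; by left.
have Hle := msum_le (fun z zM => (Hz z zM).1).
split; first by rewrite rE rD; lia.
move=> Hlt; have [z [zM Hzl]] := @msum_lt_ex M (Pz (Some a, c) (None, b)) (Pz (Some a, b) (None, c)) ltac:(lia).
have [H1 H2] := (Hz z zM).2 Hzl.
by exists z.1, z.2; case: z zM Hzl H1 H2.
Qed.

Lemma mkA (N : diagram) a b c d : [&& d < c, c < b & b < a] ->
  moveAB (msetD N (msetD (S1 (Some a, c)) (S1 (Some b, d)))) (msetD N (msetD (S1 (Some a, d)) (S1 (Some b, c)))).
Proof. by move=> H; left; exists a, b, c, d; rewrite repl; split => //; split => //; apply: msubsetDr. Qed.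

Lemma mkB (N : diagram) a b c : [&& c < b & b < a] ->
  moveAB (msetD N (msetD (S1 (Some a, c)) (S1 (None, b)))) (msetD N (msetD (S1 (Some a, b)) (S1 (None, c)))).
Proof. by move=> H; right; exists a, b, c; rewrite repl; split => //; split => //; apply: msubsetDr. Qed.

Section Path.
Variables (alpha beta gamma : seq nat) (T : filling).
Hypothesis Hrow : forall i, 0 < i -> conj beta i - conj gamma i <= 1.
Local Notation DG := (DG alpha beta gamma T).

Definition stepDG D E := moveAB D E /\ DG D /\ DG E.

Lemma moveAB_rank D E : moveAB D E -> DG D -> rk D < rk E.
Proof.
move=> H HD; have HT := DG_tch Hrow HD; have HW := DG_wf HD.
case: H => [[a [b [c [d [h [HS ->]]]]]]|[a [b [c [h [HS ->]]]]]].
  by case: (rankA h HS HT HW).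
by case: (rankB h HS HT HW).
Qed.

Lemma g_mono V U : clos_refl_trans_1n _ move V U -> forall k, g k V <= g k U.
Proof.
elim=> [//|x y z Hxy _ IH] k.
by apply: leq_trans (IH k); case: (move_g Hxy) => H _; apply: H.
Qed.

Lemma path_DG V U : clos_refl_trans_1n _ move V U -> DG V -> DG U ->
  clos_refl_trans_1n _ stepDG V U.
Proof.
elim=> [x|x y z Hxy Hyz IH] HV HU; first by apply: rt1n_refl.
have [_ [Hab|[k Hk]]] := move_g Hxy.
  have Hy := moveAB_DG Hab HV.
  by econstructor 2; [split; [|split]; eauto|exact: IH].
exfalso; have := g_mono Hyz k; rewrite (DG_g k HU HV) => H.
by move: (leq_trans Hk H); rewrite ltnn.
Qed.

Lemma path_rank V U : clos_refl_trans_1n _ stepDG V U -> V = U \/ rk V < rk U.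
Proof.
elim=> [x|x y z [Hxy [Hx _]] _ [<-|IH]]; [by left| |]; right.
  exact: moveAB_rank.
by apply: ltn_trans IH; apply: moveAB_rank.
Qed.

Lemma arc_le_path U V : DG U -> DG V -> arc_le U V -> clos_refl_trans_1n _ stepDG V U.
Proof. by move=> HU HV H; apply: path_DG => //; apply: clos_rt_rt1n. Qed.

Lemma path_arc_le V U : clos_refl_trans_1n _ stepDG V U -> arc_le U V.
Proof.
elim=> [x|x y z [Hxy _] _ IH]; first by apply: rt_refl.
have Hm : move x y by case: Hxy => [H|H]; [left|right; left].
exact: (rt_trans _ _ x y z (rt_step _ _ _ _ Hm) IH).
Qed.

End Path.

Lemma decomp3 (V X : diagram) z : msubset X V -> z \in msetB V X ->
  exists M0, V = msetD (msetD M0 (S1 z)) X.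
Proof.
move=> HS Hz; exists (msetB (msetB V X) (S1 z)).
by rewrite {1}(decomp HS); congr msetD; rewrite msetDC msetB1K.
Qed.

Section Factor.
Variables (alpha beta gamma : seq nat) (T : filling).
Hypothesis Hrow : forall i, 0 < i -> conj beta i - conj gamma i <= 1.
Local Notation DG := (DG alpha beta gamma T).
Local Notation stepDG := (stepDG alpha beta gamma T).

Lemma three V F G U : DG V -> moveAB V F -> moveAB F G -> moveAB G U ->
  exists F G, stepDG V F /\ stepDG F G /\ clos_refl_trans_1n _ stepDG G U.
Proof.
move=> HV m1 m2 m3.
have HF := moveAB_DG m1 HV; have HG := moveAB_DG m2 HF; have HU := moveAB_DG m3 HG.
exists F, G; split; first by split.
split; first by split.
by econstructor 2; [split; [|split]|constructor].
Qed.

Lemma two V F U : DG V -> moveAB V F -> moveAB F U ->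
  exists F G, stepDG V F /\ stepDG F G /\ clos_refl_trans_1n _ stepDG G U.
Proof.
move=> HV m1 m2.
have HF := moveAB_DG m1 HV; have HU := moveAB_DG m2 HF.
by exists F, U; split; [split|split; [split|constructor]].
Qed.

Lemma factor V U : stepDG V U -> rk V + 1 < rk U ->
  exists F G, stepDG V F /\ stepDG F G /\ clos_refl_trans_1n _ stepDG G U.
Proof.
move=> [H [HV HU]] Hlt.
have HT := DG_tch Hrow HV; have HW := DG_wf HV.
case: H HU Hlt => [[a [b [c [d [h [HS ->]]]]]]|[a [b [c [h [HS ->]]]]]] HU Hlt.
- have [_ /(_ Hlt) [o [t [zM /and4P[t1 t2 o1 o2]]]]] := rankA h HS HT HW.
  have [M0 eV] := decomp3 HS zM.
  move: h => /and3P[h1 h2 h3].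
  rewrite eV repl.
  apply: (@three _ (msetD (msetD M0 (S1 (Some a,c))) (msetD (S1 (Some o,d)) (S1 (Some b,t))))
                   (msetD (msetD M0 (S1 (Some o,d))) (msetD (S1 (Some a,t)) (S1 (Some b,c))))).
  + by rewrite -eV.
  + rewrite (_ : msetD _ _ = msetD (msetD M0 (S1 (Some a,c))) (msetD (S1 (Some o,t)) (S1 (Some b,d)))); last by mset_solve.
    apply: mkA; apply/and3P; split => //; lia.
  + rewrite (_ : msetD (msetD M0 (S1 (Some a,c))) _ = msetD (msetD M0 (S1 (Some o,d))) (msetD (S1 (Some a,c)) (S1 (Some b,t)))); last by mset_solve.
    apply: mkA; apply/and3P; split => //; lia.
  + rewrite (_ : msetD (msetD M0 (S1 (Some o,d))) _ = msetD (msetD M0 (S1 (Some b,c))) (msetD (S1 (Some a,t)) (S1 (Some o,d)))); last by mset_solve.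
    rewrite (_ : msetD (msetD M0 (S1 (Some o,t))) _ = msetD (msetD M0 (S1 (Some b,c))) (msetD (S1 (Some a,d)) (S1 (Some o,t)))); last by mset_solve.
    apply: mkA; apply/and3P; split => //; lia.
- have [_ /(_ Hlt) [o [t [zM [/andP[t1 t2] Ho]]]]] := rankB h HS HT HW.
  move: h => /andP[h2 h3].
  case: Ho zM => [->|[m [-> am]]] zM; have [M0 eV] := decomp3 HS zM; rewrite eV repl.
  + apply: (@two _ (msetD (msetD M0 (S1 (None,b))) (msetD (S1 (Some a,t)) (S1 (None,c))))).
    * by rewrite -eV.
    * rewrite (_ : msetD _ _ = msetD (msetD M0 (S1 (None,b))) (msetD (S1 (Some a,c)) (S1 (None,t)))); last by mset_solve.
      apply: mkB; apply/andP; split => //; lia.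
    * rewrite (_ : msetD (msetD M0 (S1 (None,b))) _ = msetD (msetD M0 (S1 (None,c))) (msetD (S1 (Some a,t)) (S1 (None,b)))); last by mset_solve.
      rewrite (_ : msetD (msetD M0 (S1 (None,t))) _ = msetD (msetD M0 (S1 (None,c))) (msetD (S1 (Some a,b)) (S1 (None,t)))); last by mset_solve.
      apply: mkB; apply/andP; split => //; lia.
  + apply: (@three _ (msetD (msetD M0 (S1 (None,b))) (msetD (S1 (Some m,c)) (S1 (Some a,t))))
                   (msetD (msetD M0 (S1 (Some m,c))) (msetD (S1 (Some a,b)) (S1 (None,t))))).
    * by rewrite -eV.
    * rewrite (_ : msetD _ _ = msetD (msetD M0 (S1 (None,b))) (msetD (S1 (Some m,t)) (S1 (Some a,c)))); last by mset_solve.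
      apply: mkA; apply/and3P; split => //; lia.
    * rewrite (_ : msetD (msetD M0 (S1 (None,b))) _ = msetD (msetD M0 (S1 (Some m,c))) (msetD (S1 (Some a,t)) (S1 (None,b)))); last by mset_solve.
      apply: mkB; apply/andP; split => //; lia.
    * rewrite (_ : msetD (msetD M0 (S1 (Some m,c))) _ = msetD (msetD M0 (S1 (Some a,b))) (msetD (S1 (Some m,c)) (S1 (None,t)))); last by mset_solve.
      rewrite (_ : msetD (msetD M0 (S1 (Some m,t))) _ = msetD (msetD M0 (S1 (Some a,b))) (msetD (S1 (Some m,t)) (S1 (None,c)))); last by mset_solve.
      apply: mkB; apply/andP; split => //; lia.
Qed.

End Factor.

Lemma pair_decomp (D : diagram) x y : x \in D -> y \in D -> x != y ->
  exists M, D = msetD M (msetD (S1 x) (S1 y)).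
Proof.
move=> Hx Hy Hxy.
have Hy' : y \in msetB D (S1 x) by rewrite in_msetB msetnE eq_sym (negbTE Hxy) -in_mset.
have e1 := msetB1K Hx; have e2 := msetB1K Hy'.
move: e1 e2; set D1 := msetB D _; set D2 := msetB D1 _.
clearbody D1 D2 => e1 e2; exists D2.
rewrite -e1 -e2; mset_solve.
Qed.

Section Uniq.
Variables (alpha beta gamma : seq nat) (T : filling).
Hypothesis Hrow : forall i, 0 < i -> conj beta i - conj gamma i <= 1.
Local Notation DG := (DG alpha beta gamma T).

Lemma twice D x y i : DG D -> x \in D -> y \in msetB D (S1 x) -> 0 < i ->
  touches i x -> touches i y -> False.
Proof.
move=> HD Hx Hy ip tx ty.
have := DG_tch Hrow HD ip; rewrite mcountE -(msetB1K Hx) msumD msum1 tx.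
have := msum_ge (fun w : member => nat_of_bool (touches i w)) Hy; rewrite /= ty; lia.
Qed.

Lemma twice2 D x y i : DG D -> x \in D -> y \in D -> x != y -> 0 < i ->
  touches i x -> touches i y -> False.
Proof.
move=> HD Hx Hy Hxy; apply: twice HD Hx _.
by rewrite in_msetB msetnE eq_sym (negbTE Hxy) -in_mset.
Qed.

Lemma mult1 D x : DG D -> x \in D -> D x = 1.
Proof.
move=> HD Hx; have := Hx; rewrite in_mset.
case: (ltngtP (D x) 1) => // H _; exfalso.
have wx := DG_wf HD Hx.
have x0 : 0 < x.2 by case: x wx Hx {H} => [[?|] ?] /= /andP[] //.
apply: (twice (D:=D) (x:=x) (y:=x) (i:=x.2) HD Hx) => //; last by rewrite /touches eqxx orbT.
- by rewrite msetB11.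
- by rewrite /touches eqxx orbT.
Qed.

Lemma ex_touch D1 D2 w i : DG D1 -> DG D2 -> 0 < i -> w \in D2 -> touches i w ->
  exists w', w' \in D1 /\ touches i w'.
Proof.
move=> [[_ [_ [_ H1]]] _] [[_ [_ [_ H2]]] _] ip Hw tw.
have : 0 < mcount D1 (touches i).
  rewrite H1 // -H2 // mcountE.
  by apply: leq_trans (msum_ge (fun w : member => nat_of_bool (touches i w)) Hw); rewrite /= tw.
rewrite mcountE => /msum_gt0 [w' [Hw' tw']]; exists w'; split => //.
by move: tw'; case: (touches i w').
Qed.

Lemma ex_src D1 D2 w i : DG D1 -> DG D2 -> w \in D2 -> w.1 = Some i ->
  exists t, (Some i, t) \in D1.
Proof.
move=> HD1 HD2 Hw ew.
have ip : 0 < i.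
  have := DG_wf HD2 Hw; case: w Hw ew => [o t] /= _ ->; rewrite /well_formed_member /=; lia.
have : 0 < mcount D1 (fun x => x.1 == Some i).
  have [_ L1] := HD1; have [_ L2] := HD2; rewrite L1 // -L2 //.
  rewrite mcountE; apply: leq_trans (msum_ge (fun w : member => nat_of_bool (w.1 == Some i)) Hw).
  by rewrite /= ew eqxx.
rewrite mcountE => /msum_gt0 [[o t] [Hw' tw']]; exists t.
by move: tw'; case: eqP => //= <-.
Qed.


Lemma uniq_gen (Pr : diagram -> Prop)
 (step : forall V1 V2 s t1 t2, DG V1 -> DG V2 -> Pr V1 -> Pr V2 ->
     (forall s' t, s' < s -> ((Some s',t) \in V1) = ((Some s',t) \in V2)) ->
     (Some s, t1) \in V1 -> (Some s, t2) \in V2 -> t1 < t2 -> False) :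
 forall V1 V2, DG V1 -> DG V2 -> Pr V1 -> Pr V2 -> V1 = V2.
Proof.
have dir s : forall W1 W2, DG W1 -> DG W2 -> Pr W1 -> Pr W2 ->
    (forall s' t, s' < s -> ((Some s',t) \in W1) = ((Some s',t) \in W2)) ->
    forall t, (Some s,t) \in W1 -> (Some s,t) \in W2.
  move=> W1 W2 H1 H2 P1 P2 IH t Ht.
  have [t2 Ht2] := ex_src H2 H1 Ht (erefl _).
  case: (ltngtP t t2) => [lt|lt|e]; last by subst.
    by exfalso; exact: (step W1 W2 s t t2).
  exfalso.
  apply: (step W2 W1 s t2 t) => // s' t' /IH ->; done.
have arcs V1 V2 : DG V1 -> DG V2 -> Pr V1 -> Pr V2 ->
    forall s t, ((Some s,t) \in V1) = ((Some s,t) \in V2).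
  move=> H1 H2 P1 P2 s; elim/ltn_ind: s => s IH t.
  apply/idP/idP; first by apply: (dir s V1 V2) => // s' t' lt; exact: IH.
  by apply: (dir s V2 V1) => // s' t' lt; rewrite IH.
have poles V1 V2 : DG V1 -> DG V2 -> Pr V1 -> Pr V2 ->
    forall t, (None,t) \in V1 -> (None,t) \in V2.
  move=> H1 H2 P1 P2 t Ht.
  have t0 : 0 < t by have := DG_wf H1 Ht; rewrite /well_formed_member /=; case/andP.
  have tw0 : touches t (None, t) by rewrite /touches eqxx orbT.
  have [[o u] [Hw tw]] := ex_touch H2 H1 t0 Ht tw0.
  move: tw; rewrite /touches /= => /orP[/eqP eo|/eqP eu].
    have [t' Ht'] := ex_src H1 H2 Hw eo.
    by exfalso; apply: (twice2 (i:=t) H1 Ht Ht') => //; rewrite /touches eqxx ?orbT.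
  subst u; case: o Hw => [s'|] Hw //.
  rewrite -(arcs V1 V2) // in Hw.
  by exfalso; apply: (twice2 (i:=t) H1 Ht Hw) => //; rewrite /touches eqxx ?orbT.
move=> V1 V2 H1 H2 P1 P2; apply/msetP => w.
have mem : (w \in V1) = (w \in V2).
  case: w => [[s|] t]; first exact: arcs.
  by apply/idP/idP; apply: poles.
case: (boolP (w \in V1)) => Hw1.
  by rewrite mult1 // mult1 // -mem.
have Hw2 : w \notin V2 by rewrite -mem.
by move/mset_eq0P: Hw1 => ->; move/mset_eq0P: Hw2 => ->.
Qed.

End Uniq.

Section Steps.
Variables (alpha beta gamma : seq nat) (T : filling).
Hypothesis Hrow : forall i, 0 < i -> conj beta i - conj gamma i <= 1.
Local Notation DG := (DG alpha beta gamma T).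

Lemma moveAB_DG_rev W V : moveAB W V -> DG V -> DG W.
Proof.
case=> [[a [b [c [d [/and3P[h1 h2 h3] [HS ->]]]]]]|[a [b [c [/andP[h2 h3] [HS ->]]]]]] HV.
- have wx : well_formed_member (Some a, d).
    by apply: (DG_wf HV); rewrite /replace2 in_S1D eqxx !orbT.
  rewrite (decomp HS); move: HV; rewrite /replace2; apply: DG_pres => //=.
  all: try (move: wx; rewrite /well_formed_member /=; lia).
  all: try (by move=> i; rewrite /touches /= ?Some_eq; lia).
  all: try (by move=> i; rewrite /= ?Some_eq; lia).
- have wy : well_formed_member (None, c).
    by apply: (DG_wf HV); rewrite /replace2 in_S1D eqxx !orbT.
  rewrite (decomp HS); move: HV; rewrite /replace2; apply: DG_pres => //=.
  all: try (move: wy; rewrite /well_formed_member /=; lia).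
  all: try (by move=> i; rewrite /touches /= ?Some_eq; lia).
  all: try (by move=> i; rewrite /= ?Some_eq; lia).
Qed.

Definition isBot D := forall E, ~ moveAB D E.
Definition isTop D := forall W, DG W -> ~ moveAB W D.

Lemma neq_pair (o1 o2 : option nat) (u1 u2 : nat) : (o1 != o2) || (u1 != u2) -> (o1, u1) != (o2, u2).
Proof. by case/orP => H; apply/eqP => [[e1 e2]]; move: H; rewrite ?e1 ?e2 eqxx. Qed.

Lemma wf_arc D s t : DG D -> (Some s, t) \in D -> 0 < t /\ t < s.
Proof. by move=> HD /(DG_wf HD) /andP. Qed.

Lemma tch_t (o : option nat) t : touches t (o, t).
Proof. by rewrite /touches eqxx orbT. Qed.
Lemma tch_s s t : touches s (Some s, t).
Proof. by rewrite /touches eqxx. Qed.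

Ltac dst := apply: neq_pair; rewrite ?Some_eq; apply/orP;
  first [ by left | (left; apply/eqP; lia) | (right; apply/eqP; lia) ].

Lemma bot_step V1 V2 s t1 t2 : DG V1 -> DG V2 -> isBot V1 -> isBot V2 ->
  (forall s' t, s' < s -> ((Some s',t) \in V1) = ((Some s',t) \in V2)) ->
  (Some s, t1) \in V1 -> (Some s, t2) \in V2 -> t1 < t2 -> False.
Proof.
move=> H1 H2 B1 B2 IH h1 h2 lt.
have [t10 t1s] := wf_arc H1 h1; have [t20 t2s] := wf_arc H2 h2.
have [[o u] [Hw tw]] := ex_touch H1 H2 t20 h2 (tch_t _ _).
move: tw; rewrite /touches /= => /orP[/eqP eo|/eqP eu].
  have [t' Ht'] := ex_src H2 H1 Hw eo.
  by apply: (twice2 Hrow (i:=t2) H2 h2 Ht') => //; rewrite ?tch_t ?tch_s //; dst.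
subst u; case: o Hw => [s'|] Hw.
  case: (ltngtP s' s) => [lt'|lt'|e].
  - rewrite IH // in Hw.
    by apply: (twice2 Hrow (i:=t2) H2 h2 Hw) => //; rewrite ?tch_t //; dst.
  - have [M eM] := pair_decomp Hw h1 ltac:(dst).
    apply: (B1 _ (_ : moveAB _ (msetD M (msetD (S1 (Some s', t1)) (S1 (Some s, t2)))))).
    by rewrite eM; apply: mkA; apply/and3P; split.
  - subst s'.
    by apply: (twice2 Hrow (i:=s) H1 h1 Hw) => //; rewrite ?tch_s //; try lia; dst.
have [M eM] := pair_decomp h1 Hw ltac:(dst).
apply: (B1 _ (_ : moveAB _ (msetD M (msetD (S1 (Some s, t2)) (S1 (None, t1)))))).
by rewrite eM; apply: mkB; apply/andP; split.
Qed.

Lemma top_step V1 V2 s t1 t2 : DG V1 -> DG V2 -> isTop V1 -> isTop V2 ->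
  (forall s' t, s' < s -> ((Some s',t) \in V1) = ((Some s',t) \in V2)) ->
  (Some s, t1) \in V1 -> (Some s, t2) \in V2 -> t1 < t2 -> False.
Proof.
move=> H1 H2 B1 B2 IH h1 h2 lt.
have [t10 t1s] := wf_arc H1 h1; have [t20 t2s] := wf_arc H2 h2.
have [[o u] [Hw tw]] := ex_touch H2 H1 t10 h1 (tch_t _ _).
move: tw; rewrite /touches /= => /orP[/eqP eo|/eqP eu].
  have [t' Ht'] := ex_src H1 H2 Hw eo.
  by apply: (twice2 Hrow (i:=t1) H1 h1 Ht') => //; rewrite ?tch_t ?tch_s //; dst.
subst u; case: o Hw => [s'|] Hw.
  case: (ltngtP s' s) => [lt'|lt'|e].
  - rewrite -IH // in Hw.
    by apply: (twice2 Hrow (i:=t1) H1 h1 Hw) => //; rewrite ?tch_t //; dst.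
  - have [M eM] := pair_decomp Hw h2 ltac:(dst).
    have mv : moveAB (msetD M (msetD (S1 (Some s', t2)) (S1 (Some s, t1)))) V2.
      by rewrite eM; apply: mkA; apply/and3P; split.
    exact: (B2 _ (moveAB_DG_rev mv H2) mv).
  - subst s'.
    by apply: (twice2 Hrow (i:=s) H2 h2 Hw) => //; rewrite ?tch_s //; try lia; dst.
have [M eM] := pair_decomp h2 Hw ltac:(dst).
have mv : moveAB (msetD M (msetD (S1 (Some s, t1)) (S1 (None, t2)))) V2.
  by rewrite eM; apply: mkB; apply/andP; split.
exact: (B2 _ (moveAB_DG_rev mv H2) mv).
Qed.

End Steps.

Lemma ex_max (T : eqType) (s : seq T) (P : pred T) (f : T -> nat) : has P s ->
  exists x, [/\ x \in s, P x & forall y, y \in s -> P y -> f y <= f x].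
Proof.
elim: s => [//|a s IH] /=.
case: (boolP (has P s)) => [Hs _|Hs Pa].
  have [x [xs Px Hx]] := IH Hs.
  case: (boolP (P a)) => Pa.
    case: (leqP (f a) (f x)) => Hax.
      exists x; split; rewrite ?inE ?xs ?orbT // => y; rewrite inE => /orP[/eqP->|ys] //; exact: Hx.
    exists a; split; rewrite ?inE ?eqxx // => y; rewrite inE => /orP[/eqP->|ys] // Py.
    by apply: leq_trans (Hx y ys Py) (ltnW Hax).
  exists x; split; rewrite ?inE ?xs ?orbT // => y; rewrite inE => /orP[/eqP->|ys] //; last exact: Hx.
  by rewrite (negbTE Pa).
rewrite orbF in Pa; exists a; split; rewrite ?inE ?eqxx // => y; rewrite inE => /orP[/eqP->|ys] // Py.
by move/hasPn: Hs => /(_ y ys); rewrite Py.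
Qed.

Lemma ex_min (T : eqType) (s : seq T) (P : pred T) (f : T -> nat) : has P s ->
  exists x, [/\ x \in s, P x & forall y, y \in s -> P y -> f x <= f y].
Proof.
elim: s => [//|a s IH] /=.
case: (boolP (has P s)) => [Hs _|Hs Pa].
  have [x [xs Px Hx]] := IH Hs.
  case: (boolP (P a)) => Pa.
    case: (leqP (f x) (f a)) => Hax.
      exists x; split; rewrite ?inE ?xs ?orbT // => y; rewrite inE => /orP[/eqP->|ys] //; exact: Hx.
    exists a; split; rewrite ?inE ?eqxx // => y; rewrite inE => /orP[/eqP->|ys] // Py.
    by apply: leq_trans (ltnW Hax) (Hx y ys Py).
  exists x; split; rewrite ?inE ?xs ?orbT // => y; rewrite inE => /orP[/eqP->|ys] //; last exact: Hx.
  by rewrite (negbTE Pa).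
rewrite orbF in Pa; exists a; split; rewrite ?inE ?eqxx // => y; rewrite inE => /orP[/eqP->|ys] // Py.
by move/hasPn: Hs => /(_ y ys); rewrite Py.
Qed.

Section Chain.
Variables (alpha beta gamma : seq nat) (T : filling).
Hypothesis Hrow : forall i, 0 < i -> conj beta i - conj gamma i <= 1.
Local Notation DG := (DG alpha beta gamma T).
Local Notation stepDG := (stepDG alpha beta gamma T).
Local Notation sat := (saturated_chain alpha beta gamma T).
Local Open Scope fset_scope.

Lemma le_rank U V : DG U -> DG V -> arc_le U V -> U = V \/ rk V < rk U.
Proof.
move=> HU HV H; case: (path_rank Hrow (arc_le_path HU HV H)) => [->|]; by [left|right].
Qed.

Lemma arc_trans X Y Z : arc_le X Y -> arc_le Y Z -> arc_le X Z.
Proof. move=> H1 H2; exact: (rt_trans _ _ _ _ _ H2 H1). Qed.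

Lemma arc_refl X : arc_le X X.
Proof. exact: rt_refl. Qed.

Lemma cmp_rank U V : DG U -> DG V -> (arc_le U V \/ arc_le V U) -> rk V <= rk U -> arc_le U V.
Proof.
move=> HU HV [//|H] Hr; case: (le_rank HV HU H) => [->|lt]; first exact: arc_refl.
by exfalso; move: (leq_trans lt Hr); rewrite ltnn.
Qed.

Lemma extend C F : sat C -> DG F -> (forall X, X \in C -> arc_le F X \/ arc_le X F) -> F \in C.
Proof.
move=> [[HC1 HC2] Hmax] HF Hcmp.
have Hc : is_chain alpha beta gamma T (F |` C).
  split.
    by move=> D; rewrite in_fset1U => /orP[/eqP->|/HC1].
  move=> D E; rewrite !in_fset1U => /orP[/eqP->|HD] /orP[/eqP->|HE].
  - by left; apply: arc_refl.
  - exact: Hcmp.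
  - by case: (Hcmp D HD); [right|left].
  - exact: HC2.
by rewrite -(Hmax _ Hc (fsubsetUr _ _)) in_fset1U eqxx.
Qed.

Lemma top_ok C V : sat C -> V \in C -> (forall X, X \in C -> rk V <= rk X) -> isTop alpha beta gamma T V.
Proof.
move=> HS HV Hmin W HW mv.
have [[HC1 HC2] _] := HS.
have DV := HC1 V HV.
have st : stepDG W V by split; [|split].
have lt := moveAB_rank Hrow mv HW.
have HWV : arc_le V W.
  by apply: path_arc_le; econstructor 2; [exact: st|constructor].
have : W \in C.
  apply: extend => // X HX; right.
  apply: arc_trans HWV; apply: cmp_rank; [exact: HC1 | done | exact: HC2 | exact: Hmin].
by move/Hmin; rewrite leqNgt lt.
Qed.

Lemma bot_ok C U : sat C -> U \in C -> (forall X, X \in C -> rk X <= rk U) -> isBot U.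
Proof.
move=> HS HU Hmax E mv.
have [[HC1 HC2] _] := HS.
have DU := HC1 U HU.
have HE := moveAB_DG mv DU.
have st : stepDG U E by split; [|split].
have lt := moveAB_rank Hrow mv DU.
have HEU : arc_le E U.
  by apply: path_arc_le; econstructor 2; [exact: st|constructor].
have : E \in C.
  apply: extend => // X HX; left.
  apply: arc_trans HEU _; apply: cmp_rank; [done | exact: HC1 | exact: HC2 | exact: Hmax].
by move/Hmax; rewrite leqNgt lt.
Qed.

Lemma between V U : clos_refl_trans_1n _ stepDG V U -> rk V + 1 < rk U ->
  exists F, [/\ DG F, arc_le F V, arc_le U F & rk V < rk F < rk U].
Proof.
case=> [|W U' st Hp] Hlt; first by rewrite ltnNge leq_addr in Hlt.
case: Hp st Hlt => [|W2 U'' st2 Hp2] st Hlt.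
  have [F [G [s1 [s2 Hp]]]] := factor Hrow st Hlt.
  exists F; split.
  - by case: s1 => _ [].
  - by apply: path_arc_le; econstructor 2; [exact: s1|constructor].
  - by apply: path_arc_le; econstructor 2; [exact: s2|exact: Hp].
  - have r1 := moveAB_rank Hrow s1.1 s1.2.1.
    have r2 := moveAB_rank Hrow s2.1 s2.2.1.
    have r3 := path_rank Hrow Hp.
    apply/andP; split => //; case: r3 => [<-|r3] //; lia.
exists W; split.
- by case: st => _ [].
- by apply: path_arc_le; econstructor 2; [exact: st|constructor].
- by apply: path_arc_le; econstructor 2; [exact: st2|exact: Hp2].
- have r1 := moveAB_rank Hrow st.1 st.2.1.
  have r2 := moveAB_rank Hrow st2.1 st2.2.1.
  have r3 := path_rank Hrow Hp2.
  apply/andP; split => //; case: r3 => [<-|r3] //; lia.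
Qed.

Lemma gap C Vt Ub k : sat C -> Vt \in C -> Ub \in C -> rk Vt <= k <= rk Ub ->
  exists X, X \in C /\ rk X = k.
Proof.
move=> HS HVt HUb /andP[k1 k2].
case: (boolP (has (fun X => rk X == k) (enum_fset C))) => [/hasP[X HX /eqP e]|Hn].
  by exists X.
exfalso.
have nk X : X \in C -> rk X != k by move=> HX; move/hasPn: Hn => /(_ X HX).
have [[HC1 HC2] _] := HS.
have [V [HV Vk Vmax]] := @ex_max _ (enum_fset C) (fun X => rk X < k) rk
  ltac:(apply/hasP; exists Vt => //=; have := nk _ HVt; lia).
have [U [HU Uk Umin]] := @ex_min _ (enum_fset C) (fun X => k < rk X) rk
  ltac:(apply/hasP; exists Ub => //=; have := nk _ HUb; lia).
have DV := HC1 V HV; have DU := HC1 U HU.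
have HUV : arc_le U V by apply: cmp_rank => //; [exact: HC2 | move: Vk Uk => /= ; lia].
have [F [DF HFV HUF /andP[r1 r2]]] := between (arc_le_path DU DV HUV) ltac:(move: Vk Uk => /=; lia).
have : F \in C.
  apply: extend => // X HX.
  case: (ltnP (rk X) k) => Xk.
    left; apply: arc_trans HFV _; apply: cmp_rank => //; [exact: HC1 | exact: HC2 | exact: Vmax].
  right; apply: arc_trans _ HUF; apply: cmp_rank => //; [exact: HC1 | exact: HC2 |].
  apply: Umin => //=; have := nk _ HX; lia.
move=> HF; case: (ltnP (rk F) k) => Fk.
  by have := Vmax F HF Fk; lia.
by have := Umin F HF; have := nk _ HF; lia.
Qed.

End Chain.

Section Final.
Variables (alpha beta gamma : seq nat) (T : filling).
Hypothesis Hrow : forall i, 0 < i -> conj beta i - conj gamma i <= 1.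
Local Notation DG := (DG alpha beta gamma T).
Local Notation sat := (saturated_chain alpha beta gamma T).
Local Open Scope fset_scope.

Lemma card_chain C Vt Ub : sat C -> Vt \in C -> Ub \in C ->
  (forall X, X \in C -> rk Vt <= rk X) -> (forall X, X \in C -> rk X <= rk Ub) ->
  #|` C| = (rk Ub - rk Vt).+1.
Proof.
move=> HS HV HU Hmin Hmax.
have [[HC1 HC2] _] := HS.
have inj : {in enum_fset C &, injective rk}.
  move=> X Y HX HY e.
  case: (HC2 X Y HX HY) => H.
    by case: (le_rank Hrow (HC1 X HX) (HC1 Y HY) H) => //; rewrite e ltnn.
  by case: (le_rank Hrow (HC1 Y HY) (HC1 X HX) H) => //; rewrite e ltnn.
have u : uniq (map rk (enum_fset C)) by rewrite (map_inj_in_uniq inj) fset_uniq.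
have em : map rk (enum_fset C) =i iota (rk Vt) (rk Ub - rk Vt).+1.
  move=> k; rewrite mem_iota; apply/mapP/idP.
    move=> [X HX ->]; have := Hmin X HX; have := Hmax X HX; lia.
  move=> Hk; have [X [HX e]] := gap Hrow (k:=k) HS HV HU ltac:(have := Hmin Ub HU; lia).
  by exists X.
have := perm_size (uniq_perm u (iota_uniq _ _) em).
by rewrite size_map size_iota.
Qed.

Lemma top_uniq V1 V2 : DG V1 -> DG V2 -> isTop alpha beta gamma T V1 -> isTop alpha beta gamma T V2 -> V1 = V2.
Proof. by apply: (uniq_gen Hrow (Pr := isTop alpha beta gamma T)); apply: top_step. Qed.

Lemma bot_uniq V1 V2 : DG V1 -> DG V2 -> isBot V1 -> isBot V2 -> V1 = V2.
Proof. by apply: (uniq_gen Hrow (Pr := isBot)); apply: bot_step. Qed.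

Lemma chain_ext C : sat C -> (exists X, X \in C) ->
  exists Vt Ub, [/\ isTop alpha beta gamma T Vt, isBot Ub, DG Vt, DG Ub & #|` C| = (rk Ub - rk Vt).+1].
Proof.
move=> HS [X HX].
have [[HC1 HC2] _] := HS.
have hX : has predT (enum_fset C) by apply/hasP; exists X.
have [V [HV _ Vmin]] := @ex_min _ (enum_fset C) predT rk hX.
have [U [HU _ Umax]] := @ex_max _ (enum_fset C) predT rk hX.
exists V, U; split.
- by apply: (top_ok Hrow HS HV) => Y HY; apply: Vmin.
- by apply: (bot_ok Hrow HS HU) => Y HY; apply: Umax.
- exact: HC1.
- exact: HC1.
- by apply: (card_chain HS HV HU) => Y HY; [apply: Vmin|apply: Umax].
Qed.

End Final.

End Aux.
Import Aux.

Theorem mainTheorem3 (alpha beta gamma : seq nat) (Gamma : filling) :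
  is_partition alpha -> is_partition beta -> is_partition gamma ->
  all (fun x => x <= 2) alpha ->
  (forall i, 0 < i -> conj gamma i <= conj beta i) ->
  LR_tableau alpha beta gamma Gamma ->
  (* every row of Gamma contains at most one box *)
  (forall i, 0 < i -> conj beta i - conj gamma i <= 1) ->
  forall C1 C2 : {fset diagram},
    saturated_chain alpha beta gamma Gamma C1 ->
    saturated_chain alpha beta gamma Gamma C2 ->
    chain_length C1 = chain_length C2.
Proof.
move=> _ _ _ _ _ _ Hrow C1 C2 H1 H2.
have ne C C' : saturated_chain alpha beta gamma Gamma C ->
    saturated_chain alpha beta gamma Gamma C' ->
    (exists X, X \in C') -> exists X, X \in C.
  move=> HC HC' [X HX].
  case: (boolP (has predT (enum_fset C))) => [/hasP[Y HY _]|N]; first by exists Y.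
  exists X; apply: (extend HC); first by have [[HH _] _] := HC'; apply: HH.
  by move=> Y HY; exfalso; move/hasPn: N => /(_ Y HY).
rewrite /chain_length.
case: (boolP (has predT (enum_fset C1))) => [/hasP[X HX _]|N1].
  have [Y HY] := ne C2 C1 H2 H1 (ex_intro _ X HX).
  have [V1 [U1 [T1 B1 DV1 DU1 ->]]] := chain_ext Hrow H1 (ex_intro _ X HX).
  have [V2 [U2 [T2 B2 DV2 DU2 ->]]] := chain_ext Hrow H2 (ex_intro _ Y HY).
  by rewrite (top_uniq Hrow DV1 DV2 T1 T2) (bot_uniq Hrow DU1 DU2 B1 B2).
case: (boolP (has predT (enum_fset C2))) => [/hasP[X HX _]|N2].
  have [Y HY] := ne C1 C2 H1 H2 (ex_intro _ X HX).
  by move/hasPn: N1 => /(_ Y HY).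
by move: N1 N2; rewrite !has_predT !lt0n !negbK => /eqP -> /eqP ->.
Qed.
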